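(* Let $\Gamma$ be a regular axis-parallel square grid in the plane whose squares have diameter $1$ (side length $1/\sqrt{2}$), and call the open squares of $\Gamma$ cells. Let $p$ and $q$ be any two points in the plane, each lying in some cell, with $|pq|\le 1$, and let $D(p,q)$ be the closed disk having segment $pq$ as a diameter. 1. If $p$ and $q$ are in different cells, then $D(p,q)$ intersects at most $7$ cells. 2. If $p$ and $q$ are in the same cell $\pi$, then the only cells that $D(p,q)$ can intersect are $\pi$ and its four $+$-neighbors.
   Context: The $+$-neighbors of a cell $\pi$ are the four cells that share a side with $\pi$. Cells are open (they do not contain their boundary), and disks are closed. *)

(* Defs.v *)
From Stdlib Require Export Reals ZArith List.
Open Scope R_scope.

Definition point : Type := (R * R)%type.

Definition edist (p q : point) : R :=
  sqrt ((fst p - fst q)^2 + (snd p - snd q)^2).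

(* side length of the cells: diameter 1 means side 1/sqrt 2 *)
Definition side : R := / sqrt 2.

Definition in_cell (ox oy : R) (c : Z * Z) (z : point) : Prop :=
  ox + IZR (fst c) * side < fst z < ox + IZR (fst c + 1) * side /\
  oy + IZR (snd c) * side < snd z < oy + IZR (snd c + 1) * side.

Definition in_diam_disk (p q z : point) : Prop :=
  edist z ((fst p + fst q) / 2, (snd p + snd q) / 2) <= edist p q / 2.

Definition disk_meets_cell (ox oy : R) (p q : point) (c : Z * Z) : Prop :=
  exists z, in_cell ox oy c z /\ in_diam_disk p q z.

(* c' is a +-neighbor of c: shares a side *)
Definition plus_neighbor (c c' : Z * Z) : Prop :=
  (Z.abs (fst c - fst c') + Z.abs (snd c - snd c'))%Z = 1%Z.

(* Main.v *)
Require Import Defs.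
From Stdlib Require Import Reals ZArith List.
From Stdlib Require Import Lra Lia Psatz Classical.
Open Scope R_scope.

Lemma side_pos : 0 < side.
Proof. unfold side; apply Rinv_0_lt_compat, sqrt_lt_R0; lra. Qed.

Lemma side_sq : side * side = /2.
Proof. unfold side. rewrite <- Rinv_mult. rewrite sqrt_sqrt; lra. Qed.

Lemma side_gt : 1/2 < side.
Proof. pose proof side_pos; pose proof side_sq; nra. Qed.

Lemma disk_bound (p q z : point) : in_diam_disk p q z ->
  (fst z - (fst p + fst q)/2)^2 + (snd z - (snd p + snd q)/2)^2 <= (edist p q / 2)^2.
Proof.
  unfold in_diam_disk, edist; cbn [fst snd].
  set (A := (fst z - (fst p + fst q) / 2) ^ 2 + (snd z - (snd p + snd q) / 2) ^ 2).
  set (B := (fst p - fst q) ^ 2 + (snd p - snd q) ^ 2).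
  intro H.
  assert (HA : 0 <= A) by (unfold A; apply Rplus_le_le_0_compat; apply pow2_ge_0).
  pose proof (sqrt_sqrt A HA). pose proof (sqrt_pos A). pose proof (sqrt_pos B).
  nra.
Qed.

Lemma edist_sq (p q : point) : edist p q ^ 2 = (fst p - fst q)^2 + (snd p - snd q)^2.
Proof. unfold edist. rewrite pow2_sqrt; [reflexivity|]. apply Rplus_le_le_0_compat; apply pow2_ge_0. Qed.

Lemma oned (o s p q z : R) (a c : Z) : 0 < s ->
  o + IZR a * s < p < o + IZR (a+1) * s ->
  o + IZR a * s < q < o + IZR (a+1) * s ->
  o + IZR c * s < z < o + IZR (c+1) * s ->
  -(s*s)/4 < (z-p)*(z-q) /\
  (c = a \/ ((c = a+1 \/ c = a-1)%Z /\ 0 < (z-p)*(z-q)) \/ s*s < (z-p)*(z-q)).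
Proof.
  rewrite !plus_IZR. intros Hs Hp Hq Hz. split.
  { assert (-s < p - q < s) by lra. assert ((p-q)^2 < s*s) by (replace ((p-q)^2) with ((p-q)*(p-q)) by ring; nra). assert (0 <= (z - (p+q)/2)^2) by apply pow2_ge_0. assert ((z-p)*(z-q) = (z-(p+q)/2)^2 - (p-q)^2/4) by field. lra. }
  destruct (Z.lt_trichotomy c a) as [H|[H|H]].
  - destruct (Z.eq_dec c (a-1)) as [E|E].
    + right; left. split; [right; auto|]. subst c. rewrite minus_IZR in Hz. nra.
    + right; right. assert (Hc: (c <= a - 2)%Z) by lia. apply IZR_le in Hc.
      rewrite minus_IZR in Hc.
      assert (p - z > s) by nra. assert (q - z > s) by nra. nra.
  - left; auto.
  - destruct (Z.eq_dec c (a+1)) as [E|E].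
    + right; left. split; [left; auto|]. subst c. rewrite plus_IZR in Hz. nra.
    + right; right. assert (Hc: (a + 2 <= c)%Z) by lia. apply IZR_le in Hc.
      rewrite plus_IZR in Hc.
      assert (z - p > s) by nra. assert (z - q > s) by nra. nra.
Qed.

Lemma colb (o s zx mx r : R) (a i0 : Z) : 1/2 < s -> 0 <= r <= 1/2 ->
  o + IZR a * s < zx < o + IZR (a+1) * s -> mx - r <= zx <= mx + r ->
  IZR i0 * s <= mx - r - o < (IZR i0 + 1) * s -> (i0 <= a <= i0+2)%Z.
Proof.
  rewrite plus_IZR. intros Hs Hr Hz Hm Hi. split.
  - destruct (Z_lt_le_dec a i0) as [H|H]; [|lia]. exfalso.
    assert (H1: (a+1 <= i0)%Z) by lia. apply IZR_le in H1; rewrite plus_IZR in H1. nra.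
  - destruct (Z_le_gt_dec a (i0+2)) as [H|H]; [lia|]. exfalso.
    assert (H1: (i0+3 <= a)%Z) by lia. apply IZR_le in H1; rewrite plus_IZR in H1. nra.
Qed.

Lemma far (ax ay bx by' mx my r s : R) :
  (ax-mx)^2+(ay-my)^2 <= r^2 -> (bx-mx)^2+(by'-my)^2 <= r^2 -> 0 <= r <= 1/2 ->
  s*s = /2 -> s*s < (bx-ax)^2 -> s*s < (by'-ay)^2 -> False.
Proof.
  intros H1 H2 Hr Hs Hx Hy.
  assert ((bx-ax)^2 = 2*(ax-mx)^2 + 2*(bx-mx)^2 - (ax+bx-2*mx)^2) by ring.
  assert ((by'-ay)^2 = 2*(ay-my)^2 + 2*(by'-my)^2 - (ay+by'-2*my)^2) by ring.
  pose proof (pow2_ge_0 (ax+bx-2*mx)). pose proof (pow2_ge_0 (ay+by'-2*my)).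
  assert (r^2 <= 1/4) by (replace (r^2) with (r*r) by ring; nra). lra.
Qed.

Lemma coord_bound a b r : 0 <= r -> a^2 + b^2 <= r^2 -> -r <= a <= r.
Proof.
  intros H0 H. assert (a*a <= r*r).
  { pose proof (pow2_ge_0 b). replace (a^2) with (a*a) in H by ring.
    replace (r^2) with (r*r) in H by ring. lra. }
  split; nra.
Qed.

Definition pdec : forall x y : Z * Z, {x = y} + {x <> y}.
Proof. decide equality; apply Z.eq_dec. Defined.

Lemma count7 (i0 j0 : Z) (l : list (Z*Z)) : NoDup l ->
  (forall c, In c l -> (i0 <= fst c <= i0+2)%Z /\ (j0 <= snd c <= j0+2)%Z) ->
  ~(In (i0,j0) l /\ In (i0+2,j0+2)%Z l) -> ~(In (i0+2,j0)%Z l /\ In (i0,j0+2)%Z l) ->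
  (length l <= 7)%nat.
Proof.
  intros Hnd Hb H1 H2.
  set (L9 := (i0,j0) :: (i0,j0+1)%Z :: (i0,j0+2)%Z :: (i0+1,j0)%Z :: (i0+1,j0+1)%Z
     :: (i0+1,j0+2)%Z :: (i0+2,j0)%Z :: (i0+2,j0+1)%Z :: (i0+2,j0+2)%Z :: nil).
  assert (inL : forall c, (i0 <= fst c <= i0+2)%Z /\ (j0 <= snd c <= j0+2)%Z -> In c L9).
  { intros [x y] [Hx Hy]; simpl in Hx, Hy.
    assert (x = i0 \/ x = i0+1 \/ x = i0+2)%Z as Ex by lia.
    assert (y = j0 \/ y = j0+1 \/ y = j0+2)%Z as Ey by lia.
    unfold L9.
    destruct Ex as [ -> | [ -> | -> ] ]; destruct Ey as [ -> | [ -> | -> ] ];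
      repeat (first [left; reflexivity | right]). }
  assert (key: exists e1 e2, ~In e1 l /\ ~In e2 l /\
     (e1 = (i0,j0) \/ e1 = (i0+2,j0+2)%Z) /\ (e2 = (i0+2,j0)%Z \/ e2 = (i0,j0+2)%Z)).
  { destruct (classic (In (i0,j0) l)); destruct (classic (In (i0+2,j0)%Z l)).
    - exists (i0+2,j0+2)%Z, (i0,j0+2)%Z. tauto.
    - exists (i0+2,j0+2)%Z, (i0+2,j0)%Z. tauto.
    - exists (i0,j0), (i0,j0+2)%Z. tauto.
    - exists (i0,j0), (i0+2,j0)%Z. tauto. }
  destruct key as (e1&e2&n1&n2&E1&E2).
  assert (ne : e1 <> e2).
  { intro E. subst e2. destruct E1 as [ -> | -> ]; destruct E2 as [E|E]; injection E; lia. }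
  assert (i1 : In e1 L9) by (apply inL; destruct E1 as [ -> | -> ]; simpl; lia).
  assert (i2 : In e2 L9) by (apply inL; destruct E2 as [ -> | -> ]; simpl; lia).
  assert (Hinc : incl l (remove pdec e1 (remove pdec e2 L9))).
  { intros c Hc. apply in_in_remove; [intro; subst; tauto|].
    apply in_in_remove; [intro; subst; tauto|]. apply inL, Hb, Hc. }
  pose proof (NoDup_incl_length Hnd Hinc).
  pose proof (remove_length_lt pdec L9 e2 i2).
  pose proof (remove_length_lt pdec (remove pdec e2 L9) e1 (in_in_remove pdec L9 ne i1)).
  unfold L9 in *; simpl length in *. lia.
Qed.

Theorem lemma4 (ox oy : R) (p q : point) (cp cq : Z * Z) :
  in_cell ox oy cp p -> in_cell ox oy cq q -> edist p q <= 1 ->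
  (cp <> cq ->
     forall l : list (Z * Z), NoDup l ->
       (forall c, In c l -> disk_meets_cell ox oy p q c) ->
       (length l <= 7)%nat) /\
  (cp = cq ->
     forall c, disk_meets_cell ox oy p q c -> c = cp \/ plus_neighbor cp c).
Proof.
  intros Hp Hq Hd.
  pose proof side_pos as Hs0. pose proof side_sq as Hs2. pose proof side_gt as Hs1.
  set (r := edist p q / 2).
  assert (Hr : 0 <= r <= 1/2) by (assert (0 <= edist p q) by (unfold edist; apply sqrt_pos); unfold r; lra).
  set (mx := (fst p + fst q)/2). set (my := (snd p + snd q)/2).
  split.
  - intros _ l Hnd Hl.
    set (tx := (mx - r - ox) / side). set (ty := (my - r - oy) / side).
    set (i0 := (up tx - 1)%Z). set (j0 := (up ty - 1)%Z).
    assert (Hi0 : IZR i0 * side <= mx - r - ox < (IZR i0 + 1) * side).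
    { unfold i0; rewrite minus_IZR. destruct (archimed tx) as [A1 A2].
      assert (tx * side = mx - r - ox) by (unfold tx; field; lra). nra. }
    assert (Hj0 : IZR j0 * side <= my - r - oy < (IZR j0 + 1) * side).
    { unfold j0; rewrite minus_IZR. destruct (archimed ty) as [A1 A2].
      assert (ty * side = my - r - oy) by (unfold ty; field; lra). nra. }
    assert (Pt : forall c, In c l -> exists z, in_cell ox oy c z /\
       (fst z - mx)^2 + (snd z - my)^2 <= r^2).
    { intros c Hc. destruct (Hl c Hc) as [z [Hz Hz']]. exists z. split; auto.
      apply disk_bound; auto. }
    apply (count7 i0 j0).
    + exact Hnd.
    + intros c Hc. destruct (Pt c Hc) as [z [[Hx Hy] Hz]]. split.
      * apply (colb ox side (fst z) mx r); auto.
        pose proof (coord_bound _ _ _ (proj1 Hr) Hz). lra.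
      * apply (colb oy side (snd z) my r); auto.
        rewrite Rplus_comm in Hz. pose proof (coord_bound _ _ _ (proj1 Hr) Hz). lra.
    + intros [A B]. destruct (Pt _ A) as [z1 [[Hx1 Hy1] Hz1]].
      destruct (Pt _ B) as [z2 [[Hx2 Hy2] Hz2]]. simpl in *.
      rewrite !plus_IZR in *.
      apply (far (fst z1) (snd z1) (fst z2) (snd z2) mx my r side); auto; nra.
    + intros [A B]. destruct (Pt _ A) as [z1 [[Hx1 Hy1] Hz1]].
      destruct (Pt _ B) as [z2 [[Hx2 Hy2] Hz2]]. simpl in *.
      rewrite !plus_IZR in *.
      apply (far (fst z1) (snd z1) (fst z2) (snd z2) mx my r side); auto; nra.
  - intros E c [z [Hz Hz']]. subst cq.
    apply disk_bound in Hz'. fold r mx my in Hz'.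
    assert (Hr2 : r^2 = ((fst p - fst q)^2 + (snd p - snd q)^2)/4)
      by (unfold r; rewrite <- edist_sq; field).
    assert (Hdot : (fst z - fst p)*(fst z - fst q) + (snd z - snd p)*(snd z - snd q) <= 0)
      by (unfold mx, my in Hz'; nra).
    destruct cp as [a b]; destruct c as [c d].
    destruct Hp as [Hpx Hpy]; destruct Hq as [Hqx Hqy]; destruct Hz as [Hzx Hzy].
    simpl in *.
    destruct (oned ox side (fst p) (fst q) (fst z) a c Hs0 Hpx Hqx Hzx) as [Lx Cx].
    destruct (oned oy side (snd p) (snd q) (snd z) b d Hs0 Hpy Hqy Hzy) as [Ly Cy].
    unfold plus_neighbor; simpl.
    destruct Cx as [->|[[Cx Px]|Px]]; destruct Cy as [->|[[Cy Py]|Py]];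
      try (exfalso; lra); try (left; reflexivity); right; lia.
Qed.
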